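(* Let $r\ge 2$ and $t\ge 2$ be integers, and let $n=a(r+t-1)+b$ with integers $a\ge 0$ and $0\le b\le r+t-2$. Suppose there exists a minimal $(r-1)$-$(r+t-1,r,1)$ covering of size $c$. Then $$a\left(\binom{r+t-1}{r}-c\right)+\binom{b}{r}\le ex_r\left(n,Tr(K_{1,t})\right).$$
   Context: For a graph $F$ with vertex set $\{v_1,\dots,v_p\}$ and edge set $\{e_1,\dots,e_q\}$, a hypergraph $\mathcal{H}$ contains $F$ as a trace if there exist distinct vertices $w_1,\dots,w_p\in V(\mathcal{H})$ and distinct edges $f_1,\dots,f_q\in E(\mathcal{H})$ such that whenever $e_i=v_\alpha v_\beta$, we have $f_i\cap\{w_1,\dots,w_p\}=\{w_\alpha,w_\beta\}$. For $r\ge 2$, $ex_r(n,Tr(F))$ denotes the maximum number of edges of an $n$-vertex $r$-uniform hypergraph that does not contain $F$ as a trace. $K_{1,t}$ is the star with $t$ edges. For $v\ge k\ge s$, an $s$-$(v,k,\lambda)$ covering is a collection $\mathcal{C}$ of $k$-subsets (blocks) of a $v$-element set $X$ such that every $s$-subset of $X$ is contained in at least $\lambda$ blocks of $\mathcal{C}$; its size is $|\mathcal{C}|$. A minimal covering is one of minimum possible size. *)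

(* Defs.v *)
From mathcomp Require Import all_boot.
Set Implicit Arguments. Unset Strict Implicit. Unset Printing Implicit Defensive.

Definition uniform (n r : nat) (H : {set {set 'I_n}}) : bool :=
  [forall e in H, #|e| == r].

(* A graph F with vertex set 'I_p and edges E i = (v_alpha, v_beta), i : 'I_q. *)
Definition contains_trace (n p q : nat) (E : 'I_q -> 'I_p * 'I_p)
    (H : {set {set 'I_n}}) : bool :=
  [exists w : {ffun 'I_p -> 'I_n}, injectiveb w &&
    [exists f : {ffun 'I_q -> {set 'I_n}}, injectiveb f &&
      [forall i : 'I_q, (f i \in H) &&
         (f i :&: [set w j | j : 'I_p] == [set w (E i).1; w (E i).2])]]].

(* The star K_{1,t}: vertex 0 is the centre, vertices 1..t are the leaves. *)
Definition star_edges (t : nat) (i : 'I_t) : 'I_t.+1 * 'I_t.+1 :=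
  (ord0, lift ord0 i).

Definition ex_trace (n r p q : nat) (E : 'I_q -> 'I_p * 'I_p) : nat :=
  \max_(H : {set {set 'I_n}} | uniform r H && ~~ contains_trace E H) #|H|.

Definition is_covering (s v k lam : nat) (C : {set {set 'I_v}}) : bool :=
  [forall B in C, #|B| == k] &&
  [forall S : {set 'I_v}, (#|S| == s) ==> (lam <= #|[set B in C | S \subset B]|)].

Arguments is_covering : clear implicits.

Definition minimal_covering_size (s v k lam c : nat) : Prop :=
  exists C : {set {set 'I_v}},
    is_covering s v k lam C /\ #|C| = c /\
    (forall C' : {set {set 'I_v}}, is_covering s v k lam C' -> c <= #|C'|).
Arguments ex_trace : clear implicits.

(* Main.v *)
Require Import Defs.
From mathcomp Require Import all_boot zify.

Lemma key m r t (C : {set {set 'I_m}}) :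
  is_covering (r-1) m r 1 C -> m = r + t - 1 -> 2 <= r ->
  forall (W : {set 'I_m}) w0, w0 \in W -> #|W| = t.+1 ->
  (forall x, x \in W -> x != w0 ->
     exists S : {set 'I_m}, [/\ #|S| = r, S \notin C & S :&: W = [set w0; x]]) ->
  False.
Proof.
move=> /andP[/forallP Csz /forallP Ccov] Hm Hr W w0 w0W cW HS.
set Sx := ~: W :|: [set w0].
have cSx : #|Sx| = r - 1.
  rewrite cardsU cards1.
  have -> : ~: W :&: [set w0] = set0.
    apply/setP => y; rewrite !inE; apply/negbTE; apply/negP => /andP[yW /eqP e].
    by rewrite e w0W in yW.
  rewrite cards0; have := cardsC W; rewrite card_ord; lia.
have := Ccov Sx; rewrite cSx eqxx /= card_gt0 => /set0Pn[B].
rewrite inE => /andP[BC SxB].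
have cB : #|B| = r by apply/eqP; have := Csz B; rewrite BC.
have : #|B :\: Sx| == 1.
  rewrite cardsD (setIidPr SxB) cB cSx; apply/eqP; lia.
move=> /cards1P[x Bx].
have xB : x \in B :\: Sx by rewrite Bx set11.
move: (xB); rewrite !inE negb_or negbK => /andP[/andP[xW xw0] _].
have [S [cS SC SW]] := HS x xW xw0.
have cSW : #|S :|: W| = m.
  rewrite cardsU SW cards2 eq_sym xw0 cS cW; lia.
have SWT : S :|: W = setT.
  apply/eqP; rewrite eqEcard subsetT cardsT card_ord cSW leqnn.
  by [].
have w0S : w0 \in S.
  have : w0 \in S :&: W by rewrite SW !inE eqxx.
  by rewrite inE => /andP[].
have xS : x \in S.
  have : x \in S :&: W by rewrite SW !inE eqxx orbT.
  by rewrite inE => /andP[].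
have BS : B \subset S.
  apply/subsetP => y yB.
  have [ySx|ySx] := boolP (y \in Sx).
  - move: ySx; rewrite !inE => /orP[yW|/eqP ->]; last exact: w0S.
    have : y \in S :|: W by rewrite SWT inE.
    by rewrite inE (negbTE yW) orbF.
  - have : y \in B :\: Sx by rewrite inE (negbTE ySx) yB.
    by rewrite Bx inE => /eqP ->.
have BeS : B = S by apply/eqP; rewrite eqEcard BS cS cB leqnn.
by rewrite -BeS BC in SC.
Qed.
Definition emb (n' m' k x : nat) : 'I_n'.+1 := inord (k * m'.+1 + x).

Definition Fu (n' m' a b : nat) (u : ('I_a * {set 'I_m'.+1}) + {set 'I_b})
  : {set 'I_n'.+1} :=
  match u with
  | inl p => [set emb n' m' p.1 (val x) | x in p.2]
  | inr T => [set emb n' m' a (val y) | y in T]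
  end.

Definition tagu (a b m' : nat) (u : ('I_a * {set 'I_m'.+1}) + {set 'I_b}) : nat :=
  match u with inl p => val p.1 | inr _ => a end.
Arguments tagu {a b m'} u.

Lemma emb_val n' m' k x : k * m'.+1 + x <= n' -> (emb n' m' k x : nat) = k * m'.+1 + x.
Proof. by move=> h; rewrite /emb inordK. Qed.

Lemma bnd1 n' m' a b (k : 'I_a) (x : 'I_m'.+1) :
  n'.+1 = a * m'.+1 + b -> k * m'.+1 + x <= n'.
Proof.
move=> Hn; have := leq_mul (ltn_ord k) (leqnn m'.+1); have := ltn_ord x. nia.
Qed.

Lemma bnd2 n' m' a b (y : 'I_b) :
  n'.+1 = a * m'.+1 + b -> a * m'.+1 + y <= n'.
Proof. move=> Hn; have := ltn_ord y; lia. Qed.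

Lemma emb_inj1 n' m' a b (k : 'I_a) : n'.+1 = a * m'.+1 + b ->
  injective (fun x : 'I_m'.+1 => emb n' m' k x).
Proof.
move=> Hn x y /(congr1 val) /=; rewrite !emb_val; try exact: (bnd1 _ _ _ _ _ _ Hn); move=> /eqP.
by rewrite eqn_add2l => /eqP /val_inj.
Qed.

Lemma emb_inj2 n' m' a b : n'.+1 = a * m'.+1 + b ->
  injective (fun y : 'I_b => emb n' m' a y).
Proof.
move=> Hn x y /(congr1 val) /=; rewrite !emb_val; try exact: (bnd2 _ _ _ _ _ Hn); move=> /eqP.
by rewrite eqn_add2l => /eqP /val_inj.
Qed.

Lemma Fu_prop n' m' a b u x : n'.+1 = a * m'.+1 + b -> b < m'.+1 ->
  x \in Fu n' m' a b u ->
  x %/ m'.+1 = tagu u /\ emb n' m' (tagu u) (x %% m'.+1) = x.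
Proof.
move=> Hn Hb; case: u => [[k S]|T] /imsetP[y _ ->] /=.
- rewrite emb_val; last exact: (bnd1 _ _ _ _ _ _ Hn).
  rewrite divnMDl // modnMDl divn_small // modn_small //.
  by rewrite addn0.
- have yb := ltn_ord y.
  rewrite emb_val; last exact: (bnd2 _ _ _ _ _ Hn).
  rewrite divnMDl // modnMDl divn_small ?modn_small //;
  try lia. by rewrite addn0.
Qed.

Lemma card_Fu n' m' a b u : n'.+1 = a * m'.+1 + b ->
  #|Fu n' m' a b u| = match u with inl p => #|p.2| | inr T => #|T| end.
Proof.
move=> Hn; case: u => [[k S]|T] /=; rewrite card_imset //.
- exact: emb_inj1 Hn.
- exact: emb_inj2 Hn.
Qed.

Lemma gen n' m' r t a b (C : {set {set 'I_m'.+1}}) :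
  2 <= r -> 2 <= t -> m'.+1 = r + t - 1 -> b < m'.+1 -> n'.+1 = a * m'.+1 + b ->
  is_covering (r-1) m'.+1 r 1 C ->
  a * ('C(m'.+1, r) - #|C|) + 'C(b, r) <= ex_trace n'.+1 r t.+1 t (@star_edges t).
Proof.
move=> Hr Ht Hm Hb Hn Ccov.
have Ccov' := Ccov; move: Ccov' => /andP[/forallP Csz _].
set Dm := [set S : {set 'I_m'.+1} | #|S| == r] :\: C.
set Db := [set S : {set 'I_b} | #|S| == r].
set D : {set ('I_a * {set 'I_m'.+1}) + {set 'I_b}} :=
  [set inl p | p in setX [set: 'I_a] Dm] :|: [set inr S | S in Db].
set H := [set Fu n' m' a b u | u in D].
have memD : forall u, u \in D -> match u with
    | inl p => #|p.2| = r /\ p.2 \notin C | inr T => #|T| = r end.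
  move=> [p|T]; rewrite inE => /orP[] /imsetP[q Hq e] //.
  - case: e => ->; move: Hq; rewrite !inE => /andP[_ /andP[]].
    by move=> -> /eqP.
  - by case: e => ->; move: Hq; rewrite inE => /eqP.
have Fne : forall u, u \in D -> exists x, x \in Fu n' m' a b u.
  move=> u uD; apply/set0Pn; rewrite -card_gt0 card_Fu //.
  by case: u uD => [p|T] /memD; [case=> -> _|move=> ->]; lia.
have injF : {in D &, injective (Fu n' m' a b)}.
  move=> u v uD vD e.
  have [x xu] := Fne u uD.
  have xv : x \in Fu n' m' a b v by rewrite -e.
  have [tu _] := Fu_prop _ _ _ _ _ _ Hn Hb xu.
  have [tv _] := Fu_prop _ _ _ _ _ _ Hn Hb xv.
  move: e tu tv; case: u {uD xu} => [[k S]|S]; case: v {vD xv} => [[k' S']|S'] /= e tu tv.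
  - have kk : k = k' by apply: val_inj; rewrite /= -tu -tv.
    subst k'; congr (inl (_, _)); exact: (imset_inj (emb_inj1 _ _ _ _ k Hn) e).
  - by have := ltn_ord k; rewrite -tu tv ltnn.
  - by have := ltn_ord k'; rewrite -tv tu ltnn.
  - congr inr; exact: (imset_inj (emb_inj2 _ _ _ _ Hn) e).
have cardH : #|H| = a * ('C(m'.+1, r) - #|C|) + 'C(b, r).
  rewrite card_in_imset // cardsU.
  have -> : [set inl p | p in setX [set: 'I_a] Dm] :&: [set inr S | S in Db] = set0.
    apply/setP => u; rewrite !inE; apply/negbTE/negP.
    move=> /andP[/imsetP[q _ e1] /imsetP[S _ e2]]; rewrite e1 in e2; discriminate.
  rewrite cards0 subn0 !card_imset; try (by move=> ? ? []).
  rewrite cardsX cardsT card_ord /Dm /Db cardsD !card_draws !card_ord.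
  rewrite (setIidPr _) //; apply/subsetP => S SC; rewrite inE.
  by have := Csz S; rewrite SC.
rewrite /ex_trace -cardH; apply: leq_bigmax_cond; apply/andP; split.
  apply/forallP => e; apply/implyP => /imsetP[u uD ->]; rewrite card_Fu //.
  by case: u uD => [p|T] /memD; [case=> -> _|move=> ->].

apply/negP => /existsP[w /andP[/injectiveP winj /existsP[f /andP[/injectiveP finj /forallP Hf]]]].
set W := [set w j | j : 'I_t.+1].
have Hi : forall i, f i \in H /\ f i :&: W = [set w ord0; w (lift ord0 i)].
  by move=> i; have /andP[h1 /eqP h2] := Hf i; split.
have cW : #|W| = t.+1 by rewrite card_imset // card_ord.
have w0f : forall i, w ord0 \in f i.
  move=> i; have [_ e] := Hi i.
  have : w ord0 \in f i :&: W by rewrite e !inE eqxx.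
  by rewrite inE => /andP[].
have wif : forall i, w (lift ord0 i) \in f i.
  move=> i; have [_ e] := Hi i.
  have : w (lift ord0 i) \in f i :&: W by rewrite e !inE eqxx orbT.
  by rewrite inE => /andP[].

have inF : forall i x ui, f i = Fu n' m' a b ui -> x \in f i -> x \in Fu n' m' a b ui.
  by move=> ? ? ? ->.
have t0 : 0 < t by apply: ltnW.
pose i0 : 'I_t := Ordinal t0.
have [u0 u0D fe0] := imsetP (Hi i0).1.
have fblk : forall i x, x \in f i ->
    x %/ m'.+1 = tagu u0 /\ emb n' m' (tagu u0) (x %% m'.+1) = x.
  move=> i x xf; have [ui uiD fe] := imsetP (Hi i).1.
  have [ta _] := Fu_prop _ _ _ _ _ _ Hn Hb (inF _ _ _ fe (w0f i)).
  have [tb _] := Fu_prop _ _ _ _ _ _ Hn Hb (inF _ _ _ fe0 (w0f i0)).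
  have [tx ex] := Fu_prop _ _ _ _ _ _ Hn Hb (inF _ _ _ fe xf).
  by rewrite -tb ta; split.
have Wblk : forall x, x \in W ->
    x %/ m'.+1 = tagu u0 /\ emb n' m' (tagu u0) (x %% m'.+1) = x.
  move=> x /imsetP[j _ ->]; case: (unliftP ord0 j) => [i ->|->].
  - exact: fblk (wif i).
  - exact: fblk (w0f i0).
have cU : #|f i0 :|: W| = m'.+1.
  rewrite cardsU (Hi i0).2 cards2 (inj_eq winj) neq_lift cW fe0 card_Fu //.
  by case: u0 u0D {fe0 fblk Wblk} => [p|T] /memD; [case=> -> _|move=> ->]; lia.
set K := tagu u0.
have Kdef : K = tagu u0 by [].
clearbody K.
case: u0 u0D fe0 Kdef fblk Wblk => [[k S0]|T] u0D fe0 /= Kdef fblk Wblk.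
- subst K.
  pose pos := fun x : 'I_n'.+1 => (inord (x %% m'.+1) : 'I_m'.+1).
  have posE : forall x, emb n' m' k (val (pos x)) = emb n' m' k (x %% m'.+1).
    by move=> x; congr emb; apply: inordK; rewrite ltn_pmod.
  pose embK := fun y : 'I_m'.+1 => emb n' m' k (val y).
  have embKi : injective embK := emb_inj1 _ _ _ _ k Hn.
  pose W' := [set pos x | x in W].
  have WE : W = [set embK y | y in W'].
    apply/setP => x; apply/idP/imsetP.
    - move=> xW; exists (pos x); first exact: imset_f.
      by rewrite /embK posE (Wblk x xW).2.
    - case=> y /imsetP[x' x'W ->] ->; by rewrite /embK posE (Wblk x' x'W).2.
  have cW' : #|W'| = t.+1 by rewrite -cW WE card_imset.
  have w0W : w ord0 \in W by apply: imset_f.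
  apply: (key _ _ _ _ Ccov Hm Hr W' (pos (w ord0)) _ cW').
    exact: imset_f.
  move=> x' /imsetP[x xW ->] xne; move: xW => /imsetP[j _ xj]; subst x.
  case: (unliftP ord0 j) => [i ej|ej]; last by rewrite ej eqxx in xne.
  have [ui uiD fe] := imsetP (Hi i).1.
  have [ta _] := Fu_prop _ _ _ _ _ _ Hn Hb (inF _ _ _ fe (w0f i)).
  have [tw _] := Wblk _ w0W.
  case: ui uiD fe ta => [[q S]|T] uiD fe ta /=.
  + have qk : q = k by apply: val_inj; exact: (etrans (esym ta) tw).
    subst q; have [cS SC] := memD _ uiD.
    exists S; split => //.
    apply: (imset_inj embKi).
    rewrite imsetI; last by move=> ? ? _ _; apply: embKi.
    rewrite -WE.
    have -> : [set embK y | y in S] = f i by rewrite fe.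
    rewrite (Hi i).2 imsetU1 imset_set1 ej /embK !posE (Wblk _ w0W).2.
    by rewrite (Wblk _ (imset_f _ _)).2.
  + by move: ta; rewrite tw => /= e; have := ltn_ord k; rewrite e ltnn.
- subst K.
  have sub : f i0 :|: W \subset [set emb n' m' a (val y) | y : 'I_b].
    apply/subsetP => x xU.
    have [tx ex] : x %/ m'.+1 = a /\ emb n' m' a (x %% m'.+1) = x.
      by move: xU; rewrite inE => /orP[/fblk|/Wblk].
    have xb : x %% m'.+1 < b.
      have := divn_eq x m'.+1; rewrite tx; have := ltn_ord x; lia.
    by apply/imsetP; exists (Ordinal xb).
  have := subset_leq_card sub; rewrite cU.
  have := leq_imset_card (fun y : 'I_b => emb n' m' a (val y)) 'I_b.
  move=> h1 h2; have := leq_trans h2 h1; rewrite card_ord; lia.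
Qed.


Theorem mainTheorem1 (r t a b c : nat) :
  2 <= r -> 2 <= t -> b <= r + t - 2 ->
  minimal_covering_size (r - 1) (r + t - 1) r 1 c ->
  a * ('C(r + t - 1, r) - c) + 'C(b, r)
    <= ex_trace (a * (r + t - 1) + b) r t.+1 t (@star_edges t).
Proof.
move=> Hr Ht Hb [C [Ccov [cC _]]]; subst c.
move: C Ccov; case E : (r + t - 1) => [|m'] C Ccov; first lia.
case En : (a * m'.+1 + b) => [|n'].
  have a0 : a = 0 by nia.
  have b0 : b = 0 by lia.
  by subst a b; rewrite mul0n add0n bin_small //; lia.
apply: gen => //; lia.
Qed.
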